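(* Let $P$ be a distribution on $\mathcal{X}$, $R>0$, $K>0$. Then \[ \lim_{\epsilon\searrow 0^{+}} E_e(P,R,K,\epsilon)=E_e(P,R,K,0), \] where for $\epsilon\in\mathbb{R}$, $E_e(P,R,K,\epsilon)=\min\{E_1(P,R,K,\epsilon),E_2(P,R,K,\epsilon)\}$ with \[ E_1(P,R,K,\epsilon)=\min_{TV\widetilde{V}:\; B_{T\widetilde{V}}\le B_{TV}+\epsilon\le K} F(TV,T\widetilde{V}),\qquad E_2(P,R,K,\epsilon)=\min_{TV\widetilde{V}:\; B_{TV}+\epsilon\ge K} F(TV,T\widetilde{V}), \] \[ F(TV,T\widetilde{V})=D(TV\|PW)+\big|A_{T\widetilde{V}}-R+|B_{T\widetilde{V}}-K|^{+}\big|^{+}. \]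
   Context: $\mathcal{X},\mathcal{Y}$ are finite alphabets and $W(y|x)$ is a conditional distribution of $y\in\mathcal{Y}$ given $x\in\mathcal{X}$. Logs are natural. $TV$, $T\widetilde{V}$ denote joint distributions on $\mathcal{Y}\times\mathcal{X}$ with common $\mathcal{Y}$-marginal $T$ and conditionals $V(x|y)$, $\widetilde{V}(x|y)$; minima are over all such triples (the minimum over an empty set is $+\infty$). $PW$ is the joint distribution $P(x)W(y|x)$; $D(TV\|PW)=\sum T(y)V(x|y)\log\frac{T(y)V(x|y)}{P(x)W(y|x)}$; $A_{TV}=\sum T(y)V(x|y)\log\frac{V(x|y)}{P(x)}$; $B_{TV}=\mathbb{E}_{TV}[-\log W(Y|X)]$; $|t|^{+}=\max\{0,t\}$. *)

(* Defs.v *)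
From HB Require Import structures.
From mathcomp Require Import all_boot all_order all_algebra.
From mathcomp Require Import all_classical all_reals all_analysis.
Set Implicit Arguments. Unset Strict Implicit. Unset Printing Implicit Defensive.
Import Order.TTheory GRing.Theory Num.Theory.
Local Open Scope classical_set_scope.
Local Open Scope ring_scope.

Section Defs.
Context {R : realType} {X Y : finType}.

Definition is_dist {A : finType} (p : A -> R) :=
  (forall a, 0 <= p a) /\ \sum_(a : A) p a = 1.

Definition is_cond {A B : finType} (c : A -> B -> R) := forall a, is_dist (c a).

(* triples (T, V, Vt): T on Y, V(x|y) = V y x, Vt(x|y) = Vt y x *)
Definition triple := ((Y -> R) * (Y -> X -> R) * (Y -> X -> R))%type.

Definition triples : set triple :=
  [set t | is_dist t.1.1 /\ is_cond t.1.2 /\ is_cond t.2].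

Local Open Scope ereal_scope.

(* D(TV || PW) with conventions 0 log(0/q) = 0, p log(p/0) = +oo (p > 0) *)
Definition Dkl (W : X -> Y -> R) (P : X -> R) (T : Y -> R) (V : Y -> X -> R)
  : \bar R :=
  \sum_(y : Y) \sum_(x : X)
    (if (T y * V y x == 0)%R then 0
     else if (P x * W x y == 0)%R then +oo
     else ((T y * V y x) * ln ((T y * V y x) / (P x * W x y)))%:E).

Definition Aq (P : X -> R) (T : Y -> R) (V : Y -> X -> R) : \bar R :=
  \sum_(y : Y) \sum_(x : X)
    (if (T y * V y x == 0)%R then 0
     else if (P x == 0)%R then +oo
     else ((T y * V y x) * ln (V y x / P x))%:E).

Definition Bq (W : X -> Y -> R) (T : Y -> R) (V : Y -> X -> R) : \bar R :=
  \sum_(y : Y) \sum_(x : X)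
    (if (T y * V y x == 0)%R then 0
     else if (W x y == 0)%R then +oo
     else ((T y * V y x) * - ln (W x y))%:E).

Definition pospart (t : \bar R) : \bar R := maxe 0 t.

Definition Ffun (W : X -> Y -> R) (P : X -> R) (Rr K : R) (t : triple) : \bar R :=
  Dkl W P t.1.1 t.1.2 +
  pospart (Aq P t.1.1 t.2 - Rr%:E + pospart (Bq W t.1.1 t.2 - K%:E)).

Definition E1 (W : X -> Y -> R) (P : X -> R) (Rr K eps : R) : \bar R :=
  ereal_inf (Ffun W P Rr K @`
    [set t | triples t /\
       Bq W t.1.1 t.2 <= Bq W t.1.1 t.1.2 + eps%:E /\
       Bq W t.1.1 t.1.2 + eps%:E <= K%:E]).

Definition E2 (W : X -> Y -> R) (P : X -> R) (Rr K eps : R) : \bar R :=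
  ereal_inf (Ffun W P Rr K @`
    [set t | triples t /\ Bq W t.1.1 t.1.2 + eps%:E >= K%:E]).

Definition Ee (W : X -> Y -> R) (P : X -> R) (Rr K eps : R) : \bar R :=
  mine (E1 W P Rr K eps) (E2 W P Rr K eps).

End Defs.

(* Main.v *)
Require Import Defs.
From HB Require Import structures.
From mathcomp Require Import all_boot all_order all_algebra.
From mathcomp Require Import all_classical all_reals all_analysis.
From mathcomp Require Import ring lra.
Import Order.TTheory GRing.Theory Num.Theory numFieldNormedType.Exports.
Local Open Scope classical_set_scope.
Local Open Scope ring_scope.
Section Terms.
Context {R : realType} {X Y : finType}.

Definition trm (u q r : R) : \bar R :=
  if u == 0 then 0%E else if q == 0 then +oo%E else r%:E.

Lemma trm_Ny u q r : trm u q r != -oo%E.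
Proof. by rewrite /trm; case: ifP => //; case: ifP. Qed.

Lemma sum1_Ny (u q r : X -> R) :
  (\sum_(x : X) trm (u x) (q x) (r x))%E != -oo%E.
Proof.
apply/negP => /eqP/esum_eqNyP => -[x [_ _ /eqP]]; by rewrite (negbTE (trm_Ny _ _ _)).
Qed.

Lemma sum2_Ny (u q r : Y -> X -> R) :
  (\sum_(y : Y) \sum_(x : X) trm (u y x) (q y x) (r y x))%E != -oo%E.
Proof.
rewrite esum_eqNy; apply/existsP => -[y /= /eqP].
move/esum_eqNyP => -[x [_ _ /eqP]]; by rewrite (negbTE (trm_Ny _ _ _)).
Qed.

Lemma sum2_fin (u q r : Y -> X -> R) :
  (\sum_(y : Y) \sum_(x : X) trm (u y x) (q y x) (r y x))%E != +oo%E ->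
  forall y x, q y x = 0 -> u y x = 0.
Proof.
move=> H y x q0; apply/eqP; apply/negPn/negP => u0; move/negP: H; apply.
rewrite esum_eqy; last by move=> i _; exact: sum1_Ny.
apply/existsP; exists y => /=; rewrite esum_eqy; last by move=> i _; exact: trm_Ny.
by apply/existsP; exists x => /=; rewrite /trm (negbTE u0) q0 eqxx.
Qed.

Lemma sum2E (u q r : Y -> X -> R) :
  (forall y x, q y x = 0 -> u y x = 0) ->
  (forall y x, u y x = 0 -> r y x = 0) ->
  (\sum_(y : Y) \sum_(x : X) trm (u y x) (q y x) (r y x))%E =
  (\sum_(y : Y) \sum_(x : X) (if q y x == 0 then 0 else r y x))%:E.
Proof.
move=> qu ur; rewrite -sumEFin; apply: eq_bigr => y _.
rewrite -sumEFin; apply: eq_bigr => x _; rewrite /trm.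
case: ifPn => [/eqP u0|u0]; first by rewrite ur // if_same.
case: ifPn => [/eqP q0|//]; by rewrite qu ?eqxx in u0.
Qed.

End Terms.
Section Main.
Context {R : realType} {X Y : finType} (W : X -> Y -> R) (P : X -> R) (Rr K : R).
Local Notation triple := (@triple R X Y).

Lemma pospart_y : pospart (+oo%E : \bar R) = +oo%E.
Proof. by rewrite /pospart; apply/max_idPr; rewrite leey. Qed.

Lemma pospart_ge0 (x : \bar R) : (0 <= pospart x)%E.
Proof. by rewrite /pospart le_max lexx. Qed.

Lemma pospart_Ny (x : \bar R) : pospart x != -oo%E.
Proof. by apply/negP => /eqP h; have := pospart_ge0 x; rewrite h. Qed.

Lemma F_parts (d a b : \bar R) : d != -oo%E -> a != -oo%E -> b != -oo%E ->
  (d + pospart (a - Rr%:E + pospart (b - K%:E)))%E != +oo%E ->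
  [/\ d != +oo%E, a != +oo%E & b != +oo%E].
Proof.
move: d a b => [d| |] [a| |] [b| |] //=.
all: rewrite ?pospart_y ?addey ?addye ?pospart_Ny //.
all: by rewrite /pospart max_r ?leey // addey.
Qed.


Lemma DklE (T : Y -> R) (V : Y -> X -> R) : Dkl W P T V =
  (\sum_(y : Y) \sum_(x : X) trm (T y * V y x) (P x * W x y)
     ((T y * V y x) * ln ((T y * V y x) / (P x * W x y))))%E.
Proof. by []. Qed.

Lemma AqE (T : Y -> R) (V : Y -> X -> R) : Aq P T V =
  (\sum_(y : Y) \sum_(x : X) trm (T y * V y x) (P x)
     ((T y * V y x) * ln (V y x / P x)))%E.
Proof. by []. Qed.

Lemma BqE (T : Y -> R) (V : Y -> X -> R) : Bq W T V =
  (\sum_(y : Y) \sum_(x : X) trm (T y * V y x) (W x y)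
     ((T y * V y x) * - ln (W x y)))%E.
Proof. by []. Qed.

Definition Dr (t : triple) : R := \sum_(y : Y) \sum_(x : X)
  (if P x * W x y == 0 then 0
   else (t.1.1 y * t.1.2 y x) * ln ((t.1.1 y * t.1.2 y x) / (P x * W x y))).
Definition Ar (t : triple) : R := \sum_(y : Y) \sum_(x : X)
  (if P x == 0 then 0 else (t.1.1 y * t.2 y x) * ln (t.2 y x / P x)).
Definition Br (T : Y -> R) (V : Y -> X -> R) : R := \sum_(y : Y) \sum_(x : X)
  (if W x y == 0 then 0 else (T y * V y x) * - ln (W x y)).
Definition Fr (t : triple) : R :=
  Dr t + Num.max 0 (Ar t - Rr + Num.max 0 (Br t.1.1 t.2 - K)).

Definition Sig (t : triple) := forall x y, P x * W x y = 0 ->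
  t.1.1 y * t.1.2 y x = 0 /\ t.1.1 y * t.2 y x = 0.

Lemma Ffun_Sig t : Ffun W P Rr K t != +oo%E -> Sig t.
Proof.
rewrite /Ffun DklE AqE BqE => /(F_parts _ _ _ (sum2_Ny _ _ _) (sum2_Ny _ _ _) (sum2_Ny _ _ _)).
move=> [/sum2_fin hd /sum2_fin ha /sum2_fin hb] x y pw; split; first exact: hd.
by move/eqP: pw; rewrite mulf_eq0 => /orP[] /eqP; [exact: ha|exact: hb].
Qed.

Lemma Sig_B t : Sig t -> Bq W t.1.1 t.1.2 = (Br t.1.1 t.1.2)%:E.
Proof.
move=> S; rewrite BqE sum2E // => [y x w0|y x ->]; last by rewrite mul0r.
by case: (S x y); rewrite ?w0 ?mulr0.
Qed.

Lemma Sig_Bt t : Sig t -> Bq W t.1.1 t.2 = (Br t.1.1 t.2)%:E.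
Proof.
move=> S; rewrite BqE sum2E // => [y x w0|y x ->]; last by rewrite mul0r.
by case: (S x y); rewrite ?w0 ?mulr0.
Qed.

Lemma Sig_F t : Sig t -> Ffun W P Rr K t = (Fr t)%:E.
Proof.
move=> S.
have h1 : forall y x, P x = 0 -> t.1.1 y * t.2 y x = 0.
  by move=> y x p0; case: (S x y); rewrite ?p0 ?mul0r.
have h2 : forall y x, t.1.1 y * t.2 y x = 0 ->
  t.1.1 y * t.2 y x * ln (t.2 y x / P x) = 0 by move=> y x ->; rewrite mul0r.
have h3 : forall y x, P x * W x y = 0 -> t.1.1 y * t.1.2 y x = 0.
  by move=> y x pw; case: (S x y).
have h4 : forall y x, t.1.1 y * t.1.2 y x = 0 ->
  t.1.1 y * t.1.2 y x * ln (t.1.1 y * t.1.2 y x / (P x * W x y)) = 0.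
  by move=> y x ->; rewrite mul0r.
rewrite /Ffun DklE AqE (Sig_Bt _ S) (sum2E _ _ _ h1 h2) (sum2E _ _ _ h3 h4).
by rewrite /pospart /Fr -!EFinB -EFin_max -EFinD -EFin_max -EFinD.
Qed.


Lemma Ee_le d t : triples t ->
  (K%:E <= Bq W t.1.1 t.1.2 + d%:E \/ Bq W t.1.1 t.2 <= Bq W t.1.1 t.1.2 + d%:E)%E ->
  (Ee W P Rr K d <= Ffun W P Rr K t)%E.
Proof.
move=> tt h; rewrite /Ee ge_min; case: (leP K%:E (Bq W t.1.1 t.1.2 + d%:E)) => hk.
- by apply/orP; right; apply: ereal_inf_lbound; exists t.
- apply/orP; left; apply: ereal_inf_lbound; exists t => //; split => //; split; last exact: ltW.
  by case: h => // h'; move: (lt_le_trans hk h'); rewrite ltxx.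
Qed.

Lemma Ee_mono d1 d2 : d1 <= d2 -> (Ee W P Rr K d2 <= Ee W P Rr K d1)%E.
Proof.
move=> d12; rewrite {2}/Ee le_min; apply/andP; split;
  apply: le_ereal_inf_tmp => _ [t [tt h] <-]; apply: Ee_le => //.
- right; apply: le_trans h.1 _; apply: leeD => //; by rewrite lee_fin.
- left; apply: le_trans h _; apply: leeD => //; by rewrite lee_fin.
Qed.

End Main.

Lemma le_from_lt {R : realType} (a s : \bar R) :
  (forall c : R, c%:E < a -> c%:E <= s)%E -> (a <= s)%E.
Proof.
move=> H; rewrite leNgt; apply/negP => sa.
move: a s H sa => [a| |] [s| |] // H sa.
- move: (H ((a + s) / 2)) sa; rewrite !lte_fin lee_fin => h sa.
  have := h ltac:(lra); lra.
- move: (H (a - 1)); rewrite lte_fin => h.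
  by have := h ltac:(lra).
- move: (H (s + 1)); rewrite ltey lee_fin => h; have := h isT; lra.
- by move: (H 0); rewrite ltey leeNy_eq => /(_ isT).
Qed.
Section G.
Context {R : realType}.

Lemma xlnx_small (v : R) : 0 < v <= 1 -> `|v * ln v| <= 2 * Num.sqrt v.
Proof.
move=> /andP[v0 v1].
set s := Num.sqrt v.
have s0 : 0 < s by rewrite sqrtr_gt0.
have vs : v = s * s by rewrite -expr2 sqr_sqrtr // ltW.
have lnv : ln v = 2 * ln s by rewrite vs lnM ?posrE //; ring.
have lnle : ln v <= 0 by exact: ln_le0.
rewrite ler0_norm; last by rewrite mulr_ge0_le0 // ltW.
have h : ln (s^-1) < s^-1 by apply: ln_sublinear; rewrite invr_gt0.
rewrite lnV ?posrE // in h.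
rewrite lnv vs.
have -> : - (s * s * (2 * ln s)) = 2 * (s * s) * (- ln s) by ring.
have : (s * s) * (- ln s) <= (s * s) * s^-1.
  by rewrite ler_pM2l ?mulr_gt0 // ltW.
rewrite mulrA -[s * s * s^-1]mulrA mulfV ?gt_eqF // mulr1 => H.
nra.
Qed.

Lemma cont_g (q : R) : 0 < q -> continuous (fun u : R => u * ln (u / q)).
Proof.
move=> q0 u; case: (ltgtP u 0) => [u0|u0|->].
- apply: cvg_near_cst.
  have := lt_nbhsl u0.
  apply: filterS => t t0 /=.
  by rewrite !ln0 ?mulr0 // pmulr_lle0 ?invr_gt0 // ltW.
- apply: cvgM; first exact: cvg_id.
  have h1 : {for u, continuous (fun v : R => v / q)}.
    by apply: cvgMr_tmp; exact: cvg_id.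
  have h2 : {for u / q, continuous (@ln R)} by apply: continuous_ln; rewrite divr_gt0.
  exact: (continuous_comp h1 h2).
- apply/cvgrPdist_lt => e e0; rewrite mul0r.
  set c := `|ln q|.
  set d := Num.min 1 (Num.min ((e / 4) ^+ 2) (e / (2 * (c + 1)))).
  have d0 : 0 < d.
    by rewrite !lt_min ltr01 exprn_gt0 ?divr_gt0 ?mulr_gt0 ?ltr_wpDl ?ltr01 ?normr_ge0.
  near=> v.
  have vd : `|v| < d by near: v; exact: (@nbhs0_lt _ R^o).
  rewrite sub0r normrN.
  case: (lerP v 0) => v0.
    by rewrite ln0 ?mulr0 ?normr0 // pmulr_lle0 ?invr_gt0.
  move: vd; rewrite gtr0_norm // !lt_min => /andP[v1 /andP[v2 v3]].
  rewrite ln_div ?posrE // mulrBr.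
  have h1 : `|v * ln v| <= 2 * Num.sqrt v by apply: xlnx_small; rewrite v0 ltW.
  have hs : Num.sqrt v < e / 4.
    have -> : e / 4 = Num.sqrt ((e/4)^+2) by rewrite sqrtr_sqr ger0_norm // divr_ge0 ?ltW.
    by rewrite ltr_sqrt ?exprn_gt0 ?divr_gt0.
  have h3 : `|v * ln q| < e / 2.
    rewrite normrM gtr0_norm // -/c.
    have c0 : 0 <= c by exact: normr_ge0.
    move: v3; rewrite ltr_pdivlMr ?mulr_gt0 ?ltr_wpDl ?ltr01 // => v3.
    nra.
  apply: (le_lt_trans (ler_normB _ _)); lra.
Unshelve. all: by end_near.
Qed.
End G.

Section Topo.
Import ArrowAsProduct.
Context {R : realType} {X Y : finType} (W : X -> Y -> R) (P : X -> R) (Rr K : R).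
Local Notation triple := (@triple R X Y).

Definition Z := ((Y + (Y * X)) + (Y * X))%type.

Definition tr (f : Z -> R) : triple :=
  ((fun y => f (inl (inl y)), fun y x => f (inl (inr (y, x)))),
   fun y x => f (inr (y, x))).

Definition enc (t : triple) : Z -> R := fun z =>
  match z with
  | inl (inl y) => t.1.1 y
  | inl (inr p) => t.1.2 p.1 p.2
  | inr p => t.2 p.1 p.2
  end.

Lemma tr_enc t : tr (enc t) = t.
Proof. by case: t => [[]]. Qed.

Lemma cont_ev (z : Z) : continuous (fun f : Z -> R => f z).
Proof. exact: (@proj_continuous Z (fun _ => R) z). Qed.

Lemma cont_sum1 {A : finType} (F : A -> (Z -> R) -> R) :
  (forall a, continuous (F a)) -> continuous (fun f => \sum_(a : A) F a f).
Proof.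
move=> h; apply: continuous_big => //.
exact: (@pseudometric_normed_Zmodule.add_continuous R R^o).
Qed.

Lemma cont_sum2 (F : Y -> X -> (Z -> R) -> R) :
  (forall y x, continuous (F y x)) -> continuous (fun f => \sum_y \sum_x F y x f).
Proof. by move=> h; apply: cont_sum1 => y; apply: cont_sum1 => x; exact: h. Qed.

Lemma cont_max0 : continuous (fun x : R => Num.max 0 x).
Proof.
have -> : (fun x : R => Num.max 0 x) = (fun x => (x + `|x|) / 2).
  by apply/funext => x; rewrite maxr_absE add0r sub0r normrN.
move=> x; apply: cvgMr_tmp; apply: cvgD; first exact: cvg_id.
exact: norm_continuous.
Qed.


Lemma contM (s t : (Z -> R) -> R) :
  continuous s -> continuous t -> continuous (fun f => s f * t f).
Proof. by move=> hs ht f; apply: continuousM; [exact: hs|exact: ht]. Qed.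

Lemma contD (s t : (Z -> R) -> R) :
  continuous s -> continuous t -> continuous (fun f => s f + t f).
Proof. by move=> hs ht f; apply: continuousD; [exact: hs|exact: ht]. Qed.

Lemma contC (c : R) : continuous (fun _ : Z -> R => c).
Proof. exact: cst_continuous. Qed.

Lemma contO (s : (Z -> R) -> R) (g : R -> R) :
  continuous s -> continuous g -> continuous (fun f => g (s f)).
Proof. by move=> hs hg f; apply: continuous_comp; [exact: hs|exact: hg]. Qed.

Lemma pos_of (a : R) : 0 <= a -> a != 0 -> 0 < a.
Proof. by move=> a0 an; rewrite lt_def an a0. Qed.

Lemma cont_Dr (HW : is_cond W) (HP : is_dist P) :
  continuous (fun f => Dr W P (tr f)).
Proof.
apply: cont_sum2 => y x /=; have [pw|pw] := eqVneq (P x * W x y) 0.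
  exact: cst_continuous.
have q0 : 0 < P x * W x y.
  by apply: pos_of pw; apply: mulr_ge0; [exact: HP.1 | exact: (HW x).1].
move=> f; apply: (continuous_comp (f := fun f : Z -> R => f (inl (inl y)) * f (inl (inr (y, x))))
  (g := fun u => u * ln (u / (P x * W x y)))).
  by apply: continuousM; apply: cont_ev.
exact: cont_g.
Qed.

Lemma cont_Ar (HP : is_dist P) :
  continuous (fun f => Ar P (tr f)).
Proof.
apply: cont_sum2 => y x /=; have [p0|p0] := eqVneq (P x) 0.
  exact: cst_continuous.
have q0 : 0 < P x by apply: pos_of p0; exact: HP.1.
have -> : (fun f : Z -> R => (tr f).1.1 y * (tr f).2 y x * ln ((tr f).2 y x / P x)) =
  (fun f => f (inl (inl y)) * ((fun u => u * ln (u / P x)) (f (inr (y, x))))).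
  by apply/funext => f; rewrite /= mulrA.
apply: (contM (fun g => g (inl (inl y)))); first exact: cont_ev.
apply: (contO (fun g => g (inr (y, x))) (fun u => u * ln (u / P x))); first exact: cont_ev.
exact: cont_g.
Qed.

Lemma cont_Br (i : Y -> X -> Z) :
  continuous (fun f => Br W (tr f).1.1 (fun y x => f (i y x))).
Proof.
apply: cont_sum2 => y x /=; have [w0|w0] := eqVneq (W x y) 0.
  exact: cst_continuous.
apply: contM; last exact: contC.
by apply: contM; apply: cont_ev.
Qed.

Lemma cont_Fr (HW : is_cond W) (HP : is_dist P) :
  continuous (fun f => Fr W P Rr K (tr f)).
Proof.
rewrite /Fr; apply: contD; first exact: cont_Dr.
apply: (contO _ (fun x => Num.max 0 x)); last exact: cont_max0.
apply: contD; first by apply: contD; [exact: cont_Ar | exact: contC].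
apply: (contO _ (fun x => Num.max 0 x)); last exact: cont_max0.
apply: contD; last exact: contC.
exact: (cont_Br (fun y x => inr (y, x))).
Qed.


Lemma closed_fle (h1 h2 : (Z -> R) -> R) :
  continuous h1 -> continuous h2 -> closed [set f | h1 f <= h2 f].
Proof.
move=> c1 c2.
have -> : [set f | h1 f <= h2 f] = (fun f => h1 f + - h2 f) @^-1` [set x : R | x <= 0].
  by apply/seteqP; split => f /=; rewrite subr_le0.
apply: preimage_closed; last exact: closed_le.
move=> f _; apply: contD => //; apply: (contO _ (fun x : R => - x)) => //.
move=> x; exact: continuousN.
Qed.

Lemma closed_feq (h1 h2 : (Z -> R) -> R) :
  continuous h1 -> continuous h2 -> closed [set f | h1 f = h2 f].
Proof.
move=> c1 c2.
have -> : [set f | h1 f = h2 f] = (fun f => h1 f + - h2 f) @^-1` [set x : R | x = 0].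
  by apply/seteqP; split => f /=; [move=> ->; rewrite subrr|move/eqP; rewrite subr_eq0 => /eqP].
apply: preimage_closed; last exact: closed_eq.
move=> f _; apply: contD => //; apply: (contO _ (fun x : R => - x)) => //.
move=> x; exact: continuousN.
Qed.

Lemma closed_forall {I : Type} (A : I -> set (Z -> R)) :
  (forall i, closed (A i)) -> closed [set f | forall i, A i f].
Proof.
move=> h p cp i; apply: (h i); apply: (closureS _ cp) => f; exact.
Qed.

Lemma closed_imp (b : Prop) (A : set (Z -> R)) :
  closed A -> closed [set f | b -> A f].
Proof.
move=> cA; have [hb|hb] := pselect b.
  have -> : [set f | b -> A f] = A.
    by apply/seteqP; split => f /=; [apply; exact: hb|move=> ? _].
  exact: cA.
have -> : [set f | b -> A f] = setT by apply/seteqP; split => f //= _ /hb.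
exact: closedT.
Qed.

Lemma closed_dist {A : finType} (h : A -> (Z -> R) -> R) :
  (forall a, continuous (h a)) -> closed [set f | is_dist (fun a => h a f)].
Proof.
move=> hc; apply: closedI.
  by apply: closed_forall => a; apply: closed_fle => //; exact: contC.
apply: closed_feq; last exact: contC.
exact: cont_sum1.
Qed.

Lemma closed_triples : closed [set f | triples (tr f)].
Proof.
change (closed ([set f | is_dist (tr f).1.1] `&`
  ([set f | is_cond (tr f).1.2] `&` [set f | is_cond (tr f).2]))).
apply: closedI; first by apply: (closed_dist (fun y f => f (inl (inl y)))) => ?; exact: cont_ev.
apply: closedI.
  apply: (closed_forall (fun y => [set f | is_dist ((tr f).1.2 y)])) => y.
  by apply: (closed_dist (fun x f => f (inl (inr (y, x))))) => ?; exact: cont_ev.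
apply: (closed_forall (fun y => [set f | is_dist ((tr f).2 y)])) => y.
by apply: (closed_dist (fun x f => f (inr (y, x)))) => ?; exact: cont_ev.
Qed.

Lemma closed_Sig : closed [set f | Sig W P (tr f)].
Proof.
apply: closed_forall => x; apply: closed_forall => y; apply: closed_imp.
apply: closedI; apply: closed_feq; try exact: contC; by apply: contM; apply: cont_ev.
Qed.

Definition Cset (c d : R) : set (Z -> R) :=
  [set f | triples (tr f) /\ Sig W P (tr f) /\ Fr W P Rr K (tr f) <= c /\
     (K <= Br W (tr f).1.1 (tr f).1.2 + d \/ Br W (tr f).1.1 (tr f).2 <= Br W (tr f).1.1 (tr f).1.2 + d)].

Lemma closed_Cset (HW : is_cond W) (HP : is_dist P) c d : closed (Cset c d).
Proof.
apply: closedI; first exact: closed_triples.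
apply: closedI; first exact: closed_Sig.
apply: closedI; first by apply: closed_fle; [exact: cont_Fr|exact: contC].
have cB1 := cont_Br (fun y x => inl (inr (y, x))).
have cB2 := cont_Br (fun y x => inr (y, x)).
apply: closedU; apply: closed_fle => //; try exact: contC;
  by apply: contD => //; exact: contC.
Qed.


Lemma dist_le1 {A : finType} (p : A -> R) : is_dist p -> forall a, 0 <= p a <= 1.
Proof.
move=> [p0 p1] a; rewrite p0 /= -p1 (bigD1 a) //= lerDl.
by apply: sumr_ge0 => i _; exact: p0.
Qed.

Lemma disj_lim (k bv bt : R) :
  (forall d, 0 < d -> k <= bv + d \/ bt <= bv + d) -> k <= bv \/ bt <= bv.
Proof.
move=> pC; case: (lerP k bv) => hk; first by left.
case: (lerP bt bv) => hb; first by right.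
exfalso; set m := Num.min (k - bv) (bt - bv).
have m1 : m <= k - bv by rewrite ge_min lexx.
have m2 : m <= bt - bv by rewrite ge_min lexx orbT.
have m0 : 0 < m by rewrite lt_min !subr_gt0 hk hb.
have := pC (m / 2) ltac:(by rewrite divr_gt0).
case => h; lra.
Qed.

Lemma key (HW : is_cond W) (HP : is_dist P) (c : R) :
  (c%:E < Ee W P Rr K 0)%E -> exists2 d : R, 0 < d & (c%:E <= Ee W P Rr K d)%E.
Proof.
move=> cE; have [//|nH] := pselect (exists2 d : R, 0 < d & (c%:E <= Ee W P Rr K d)%E).
exfalso.
have H d : 0 < d -> (Ee W P Rr K d < c%:E)%E.
  by move=> d0; rewrite ltNge; apply/negP => h; apply: nH; exists d.
have Cmono d1 d2 : d1 <= d2 -> Cset c d1 `<=` Cset c d2.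
  move=> d12 f [tt [S [Fc hd]]]; split => //; split => //; split => //.
  by case: hd => h; [left|right]; apply: (le_trans h); rewrite lerD2l.
have Cne d : 0 < d -> Cset c d !=set0.
  move=> d0; move: (H d d0); rewrite /Ee gt_min => /orP[] /ereal_inf_lt [_ [t ht <-] Flt].
  - have Ffin : Ffun W P Rr K t != +oo%E.
      by apply/eqP => e; rewrite e ltNge leey in Flt.
    have S : Sig W P t by apply: Ffun_Sig Ffin.
    exists (enc t); rewrite /Cset /= tr_enc; split; first by case: ht.
    split => //; split.
      by move: Flt; rewrite Sig_F // lte_fin => /ltW.
    right; case: ht => _ [+ _].
    by rewrite (Sig_B _ _ _ S) (Sig_Bt _ _ _ S) -EFinD lee_fin.
  - have Ffin : Ffun W P Rr K t != +oo%E.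
      by apply/eqP => e; rewrite e ltNge leey in Flt.
    have S : Sig W P t by apply: Ffun_Sig Ffin.
    exists (enc t); rewrite /Cset /= tr_enc; split; first by case: ht.
    split => //; split.
      by move: Flt; rewrite Sig_F // lte_fin => /ltW.
    left; case: ht => _.
    by rewrite (Sig_B _ _ _ S) -EFinD lee_fin.
have FF : ProperFilter (filter_from [set d : R | 0 < d] (Cset c)).
  apply: filter_from_proper; last exact: Cne.
  apply: filter_from_filter; first by exists 1; rewrite /= ltr01.
  move=> i j i0 j0; exists (Num.min i j); first by rewrite /= lt_min i0 j0.
  by move=> f hf; split; apply: Cmono hf; rewrite ge_min lexx ?orbT.
have Kc : compact [set f : Z -> R | forall z : Z, `[(0:R), 1]%classic (f z)].
  exact: (@tychonoff Z (fun _ => R) (fun _ => `[(0:R), 1]%classic) (fun _ => @segment_compact R 0 1)).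
have FK : filter_from [set d : R | 0 < d] (Cset c)
    [set f : Z -> R | forall z : Z, `[(0:R), 1]%classic (f z)].
  exists 1; first by rewrite /= ltr01.
  move=> f [[hT [hV hVt]] _].
  case=> [[y|[y x]]|[y x]] /=; rewrite in_itv /=.
  - by move: (dist_le1 _ hT y).
  - by move: (dist_le1 _ (hV y) x).
  - by move: (dist_le1 _ (hVt y) x).
have [p [Kp clp]] := Kc _ FF FK.
have pC d : 0 < d -> Cset c d p.
  move=> d0; apply: (closed_Cset HW HP) => B nB; apply: clp nB; by exists d.
have [tt [S [Fc _]]] := pC 1 ltr01.
have hd := disj_lim _ _ _ (fun d d0 => (pC d d0).2.2.2).
have := Ee_le W P Rr K 0 (tr p) tt.
rewrite (Sig_B _ _ _ S) (Sig_Bt _ _ _ S) -EFinD !lee_fin addr0 Sig_F // => /(_ hd) h.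
by move: (lt_le_trans cE h); rewrite lte_fin; lra.
Qed.

End Topo.

Theorem lemma3 (R : realType) (X Y : finType) (W : X -> Y -> R) (P : X -> R)
    (Rr K : R) :
  is_cond W -> is_dist P -> 0 < Rr -> 0 < K ->
  Ee W P Rr K eps @[eps --> 0^'+] --> Ee W P Rr K 0.
Proof.
move=> HW HP _ _.
have mono : {in Interval (BRight (0:R)) (BLeft 1) &, nonincreasing_fun (Ee W P Rr K)}.
  by move=> x y _ _ xy; exact: Ee_mono.
have := @nonincreasing_at_right_cvge R (Ee W P Rr K) 0 (BLeft 1) ltac:(by rewrite bnd_simp) mono.
set s := ereal_sup _; suff -> : s = Ee W P Rr K 0 by [].
apply/eqP; rewrite eq_le; apply/andP; split.
  apply: ge_ereal_sup => _ [d dI <-]; apply: Ee_mono.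
  by move: dI; rewrite /= in_itv /= => /andP[/ltW].
apply: le_from_lt => c cE; have [d d0 cd] := key W P Rr K HW HP c cE.
apply: (le_trans cd); apply: (le_trans (Ee_mono W P Rr K (Num.min d (1/2)) d _)).
  by rewrite ge_min lexx.
apply: ereal_sup_ubound; exists (Num.min d (1/2)) => //.
rewrite /= in_itv /= lt_min gt_min d0 /=; apply/andP; split; [lra|apply/orP; right; lra].
Qed.
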